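(* Consider an execution of \textsf{Sieve} (described in the context) in which the sender $\sigma$ is correct and broadcasts a message $m$. If in this execution the underlying probabilistic broadcast $pb$ satisfies totality (if some correct process $pb$-delivers a message, every correct process eventually $pb$-delivers a message), and no correct process has more than $E-\hat E$ Byzantine entries in its echo sample, then every correct process eventually delivers $m$ (i.e., total validity holds in this execution).
   Context: System model: a fixed set $\Pi$ of processes, some Byzantine (arbitrary behaviour) and the rest correct, asynchronous reliable authenticated point-to-point links (messages between correct processes are eventually delivered); signatures cannot be forged. $pb$ is a probabilistic broadcast instance: correct processes $pb$-deliver at most one message; if the sender is correct, any $pb$-delivered message was broadcast by it; a correct sender $pb$-delivers its own broadcast message. \textsf{Sieve} (parameters $E$, $\hat E$): each correct process draws an echo sample of $E$ entries, each uniformly from $\Pi$ with replacement, and sends EchoSubscribe to each; it records subscribers. To broadcast $m$, $\sigma$ $pb$-broadcasts $(m,\mathrm{sign}_\sigma(m))$. Upon $pb$-delivering a correctly signed pair, a correct process sets $echo$ to it and sends Echo with that pair to all current and future subscribers. A correct process records, for each member of its echo sample, the first correctly signed Echo received from it, and delivers (once) the message of its $echo$ when at least $\hat E$ members of its echo sample have sent Echo for that same pair. *)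

(* Defs.v *)
From mathcomp Require Import all_boot.
Set Implicit Arguments. Unset Strict Implicit. Unset Printing Implicit Defensive.

(* Time is discrete: nat. "eventually" = at some time t.
   Local state / observable histories of the execution:
   - pbd p t  : the pair p has pb-delivered by time t (None = nothing yet);
   - rec p q t: the first correctly signed Echo that p has received from q by
                time t (None = none yet);
   - dlv p t  : the message p has delivered by time t (None = none yet). *)

Definition stable (T : Type) (f : nat -> option T) : Prop :=
  forall t t' x, t <= t' -> f t = Some x -> f t' = Some x.

Definition signed_ok (Proc Msg Sig : Type) (valid : Proc -> Msg -> Sig -> bool)
  (sigma : Proc) (x : Msg * Sig) : bool := valid sigma x.1 x.2.

(* value of the variable [echo] of p at time t: set to the pb-delivered pair
   if it is correctly signed *)
Definition echo_of (Proc Msg Sig : Type) (valid : Proc -> Msg -> Sig -> bool)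
  (sigma : Proc) (pbd : Proc -> nat -> option (Msg * Sig)) (p : Proc) (t : nat)
  : option (Msg * Sig) :=
  match pbd p t with
  | Some x => if signed_ok valid sigma x then Some x else None
  | None => None
  end.

(* number of entries of p's echo sample (counted with multiplicity) from which
   p has recorded an Echo for the pair x by time t *)
Definition echo_count (Proc : eqType) (Msg Sig : eqType) (E : nat)
  (sample : Proc -> E.-tuple Proc)
  (rec : Proc -> Proc -> nat -> option (Msg * Sig)) (p : Proc) (t : nat)
  (x : Msg * Sig) : nat :=
  count (fun q => rec p q t == Some x) (sample p).

Definition deliver_cond (Proc : eqType) (Msg Sig : eqType)
  (valid : Proc -> Msg -> Sig -> bool) (sigma : Proc) (E Ehat : nat)
  (sample : Proc -> E.-tuple Proc)
  (pbd : Proc -> nat -> option (Msg * Sig))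
  (rec : Proc -> Proc -> nat -> option (Msg * Sig)) (p : Proc) (t : nat)
  (m' : Msg) : Prop :=
  exists s, echo_of valid sigma pbd p t = Some (m', s) /\
            Ehat <= echo_count sample rec p t (m', s).

Definition sieve_execution (Proc : finType) (Msg Sig : eqType)
  (correct : pred Proc) (sigma : Proc) (m : Msg)
  (sign : Proc -> Msg -> Sig) (valid : Proc -> Msg -> Sig -> bool)
  (E Ehat : nat) (sample : Proc -> E.-tuple Proc)
  (pbd : Proc -> nat -> option (Msg * Sig))
  (rec : Proc -> Proc -> nat -> option (Msg * Sig))
  (dlv : Proc -> nat -> option Msg) : Prop :=
  [/\
   (* signatures: sigma's signature on m verifies; signatures cannot be
      forged, and sigma (correct) signs only m *)
   valid sigma m (sign sigma m) /\
   (correct sigma -> forall m' s, valid sigma m' s -> m' = m),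
   (* pb: at most one (stable) pb-delivery per correct process; sigma
      pb-broadcasts (m, sign m) and pb-delivers it itself (if correct);
      pb validity for a correct sender *)
   [/\ (forall p, correct p -> stable (pbd p)),
       (correct sigma -> exists t, pbd sigma t = Some (m, sign sigma m)) &
       (correct sigma -> forall p t x, correct p -> pbd p t = Some x ->
                          x = (m, sign sigma m))],
   (* Echo handling by correct p: records the first correctly signed Echo
      from each sample member; authenticated links: an Echo from a correct q
      carries q's echo value; reliable links + subscription: a correct q in
      p's sample that has set echo eventually gets an Echo recorded by p *)
   [/\ (forall p q, correct p -> stable (rec p q)),
       (forall p q t x, correct p -> rec p q t = Some x ->
           signed_ok valid sigma x),
       (forall p q t x, correct p -> correct q -> rec p q t = Some x ->
           exists2 t', t' <= t & echo_of valid sigma pbd q t' = Some x) &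
       (forall p q t x, correct p -> correct q -> q \in sample p ->
           echo_of valid sigma pbd q t = Some x ->
           exists t', rec p q t' != None)] &
   (* delivery by correct p: at most once (stable), only when the delivery
      condition has held, and as soon as the delivery condition holds *)
   [/\ (forall p, correct p -> stable (dlv p)),
       (forall p t m', correct p -> dlv p t = Some m' ->
           exists2 t', t' <= t &
             deliver_cond valid sigma Ehat sample pbd rec p t' m') &
       (forall p t m', correct p ->
           deliver_cond valid sigma Ehat sample pbd rec p t m' ->
           dlv p t != None)]].

Definition pb_totality (Proc : Type) (Msg Sig : Type) (correct : pred Proc)
  (pbd : Proc -> nat -> option (Msg * Sig)) : Prop :=
  (exists p t x, correct p /\ pbd p t = Some x) ->
  forall q, correct q -> exists t x, pbd q t = Some x.

(* Main.v *)
Require Import Defs.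
From mathcomp Require Import all_boot.

Lemma count_le_in (T : eqType) (a b : pred T) (s : seq T) :
  (forall x, x \in s -> a x -> b x) -> count a s <= count b s.
Proof.
elim: s => //= y s IH H.
rewrite leq_add //; last by apply: IH => x xs; apply: H; rewrite inE xs orbT.
by case ay: (a y) => //; rewrite (H y) // inE eqxx.
Qed.

Lemma list_max_time (A : eqType) (P : A -> nat -> Prop) (l : seq A) :
  (forall a t t', t <= t' -> P a t -> P a t') ->
  (forall a, a \in l -> exists t, P a t) ->
  exists T, forall a, a \in l -> P a T.
Proof.
move=> Hmono; elim: l => [|y l IH] H; first by exists 0.
have [T1 HT1] : exists t, P y t by apply: H; rewrite inE eqxx.
have [T2 HT2] : exists T, forall a, a \in l -> P a T.
  by apply: IH => a al; apply: H; rewrite inE al orbT.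
exists (maxn T1 T2) => a; rewrite inE => /orP [/eqP -> | al].
  by apply: Hmono HT1; rewrite leq_maxl.
by apply: Hmono (HT2 a al); rewrite leq_maxr.
Qed.

Theorem lemma5 (Proc : finType) (Msg Sig : eqType)
  (correct : pred Proc) (sigma : Proc) (m : Msg)
  (sign : Proc -> Msg -> Sig) (valid : Proc -> Msg -> Sig -> bool)
  (E Ehat : nat) (sample : Proc -> E.-tuple Proc)
  (pbd : Proc -> nat -> option (Msg * Sig))
  (rec : Proc -> Proc -> nat -> option (Msg * Sig))
  (dlv : Proc -> nat -> option Msg) :
  sieve_execution correct sigma m sign valid Ehat sample pbd rec dlv ->
  correct sigma ->
  pb_totality correct pbd ->
  (* no correct process has more than E - Ehat Byzantine sample entries *)
  (forall p, correct p -> count (fun q => ~~ correct q) (sample p) + Ehat <= E) ->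
  forall p, correct p -> exists t, dlv p t = Some m.
Proof.
move=> [[Hval _] [Hpst Hsig Hpv] [Hrst _ Hrec Hsub] [Hdst Hdc Hdl]] Csig Htot Hbyz p Cp.
set x0 := (m, sign sigma m).
have Hpbd : forall q, correct q -> exists t, pbd q t = Some x0.
  move=> q Cq; have [t0 Ht0] := Hsig Csig.
  have [t [x Hx]] := Htot (ex_intro _ sigma (ex_intro _ t0 (ex_intro _ _ (conj Csig Ht0)))) q Cq.
  by exists t; rewrite Hx (Hpv Csig q t x Cq Hx).
have Hecho : forall q t, pbd q t = Some x0 -> echo_of valid sigma pbd q t = Some x0.
  by move=> q t H; rewrite /echo_of H /signed_ok /= Hval.
have Hechoinv : forall q t y, correct q -> echo_of valid sigma pbd q t = Some y -> y = x0.
  move=> q t y Cq; rewrite /echo_of; case E1: (pbd q t) => [z|] //.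
  by case: ifP => // _ [<-]; apply: (Hpv Csig q t z Cq E1).
have Hr : forall q, correct q -> q \in sample p -> exists t, rec p q t = Some x0.
  move=> q Cq qs; have [t Ht] := Hpbd q Cq.
  have [t' Ht'] := Hsub p q t x0 Cp Cq qs (Hecho _ _ Ht).
  case E1: (rec p q t') Ht' => [y|] // _.
  have [t'' _ He] := Hrec p q t' y Cp Cq E1.
  by exists t'; rewrite E1 (Hechoinv _ _ _ Cq He).
have [T1 HT1] : exists T, forall q, q \in sample p -> correct q -> rec p q T = Some x0.
  apply: list_max_time.
    by move=> a t t' le H Ca; apply: (Hrst p a Cp t t' x0 le (H Ca)).
  move=> a al; case Ca: (correct a); last by exists 0.
  by have [t Ht] := Hr a Ca al; exists t.
have [T2 HT2] := Hpbd p Cp.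
set T := maxn T1 T2.
have Hdc' : deliver_cond valid sigma Ehat sample pbd rec p T m.
  exists (sign sigma m); split.
    by apply: Hecho; apply: (Hpst p Cp T2 T x0 (leq_maxr _ _) HT2).
  have H1 := Hbyz p Cp.
  have H2 : count correct (sample p) <= echo_count sample rec p T x0.
    apply: count_le_in => q qs Cq.
    by rewrite (Hrst p q Cp T1 T x0 (leq_maxl _ _) (HT1 q qs Cq)).
  have H3 := count_predC correct (sample p).
  rewrite size_tuple in H3.
  apply: leq_trans H2.
  rewrite -(leq_add2r (count (predC correct) (sample p))) H3.
  by rewrite addnC; apply: H1.
have := Hdl p T m Cp Hdc'.
case E1: (dlv p T) => [m'|] // _.
exists T; rewrite E1.
have [t' _ [s [Hs _]]] := Hdc p T m' Cp E1.
by have := Hechoinv p t' _ Cp Hs => [[->]].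
Qed.
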